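(* Let $\Phi$ be an irreducible reduced root system with basis $\Delta$, Weyl group $W$ with length function $l$, highest root $\tilde\alpha$. For every positive long root $\alpha$, $l(x_\alpha s_{\tilde\alpha})=l(s_{\tilde\alpha})-l(x_\alpha)$.
   Context: Long roots are those of maximal length for a $W$-invariant scalar product $(\cdot|\cdot)$. $\tilde I=\{\alpha\in\Delta:(\tilde\alpha|\alpha)=0\}$, $\Phi_{\tilde I}^+$ the positive roots in the span of $\tilde I$, $X_{\tilde I}=\{w\in W:w(\Phi^+_{\tilde I})\subset\Phi^+\}$; for a long root $\alpha$, $x_\alpha$ is the unique element of $X_{\tilde I}$ with $x_\alpha(\tilde\alpha)=\alpha$ (it exists and is unique since $w\mapsto w(\tilde\alpha)$ induces a bijection $X_{\tilde I}\to\Phi_{\mathrm{lg}}$). *)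

(* Defs.v *)
From HB Require Import structures.
From mathcomp Require Import all_boot all_order all_algebra.
From mathcomp Require Import reals.
From Stdlib Require Import ClassicalEpsilon.
Set Implicit Arguments. Unset Strict Implicit. Unset Printing Implicit Defensive.
Import Order.TTheory GRing.Theory Num.Theory.
Local Open Scope ring_scope.

Section RootSystems.
Variables (R : realType) (n : nat).
Implicit Types (u v a b w x : 'cV[R]_n) (Phi Delta S : seq 'cV[R]_n).

Definition dot u v : R := \sum_(i < n) u i 0 * v i 0.

Definition refl_mx a : 'M[R]_n := 1%:M - (2 / dot a a) *: (a *m a^T).

Definition in_span S v : Prop :=
  exists c : 'I_(size S) -> R, v = \sum_(i < size S) c i *: S`_i.

Definition root_system Phi : Prop :=
  [/\ 0 \notin Phi,
      forall v, in_span Phi v,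
      forall a b, a \in Phi -> b \in Phi -> refl_mx a *m b \in Phi &
      forall a b, a \in Phi -> b \in Phi ->
        exists z : int, 2 * dot b a / dot a a = z%:~R].

Definition reduced Phi : Prop :=
  forall a (c : R), a \in Phi -> c *: a \in Phi -> c = 1 \/ c = -1.

Definition irreducible Phi : Prop :=
  Phi <> [::] /\
  forall P : pred 'cV[R]_n,
    (forall a b, a \in Phi -> b \in Phi -> P a -> ~~ P b -> dot a b = 0) ->
    (forall a, a \in Phi -> P a) \/ (forall a, a \in Phi -> ~~ P a).

Definition is_basis Phi Delta : Prop :=
  [/\ {subset Delta <= Phi},
      (forall c : 'I_(size Delta) -> R,
         \sum_(i < size Delta) c i *: Delta`_i = 0 -> forall i, c i = 0) &
      forall b, b \in Phi -> exists k : 'I_(size Delta) -> nat,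
        b = \sum_(i < size Delta) (k i)%:R *: Delta`_i \/
        b = - \sum_(i < size Delta) (k i)%:R *: Delta`_i].

Definition nonneg_comb Delta v : Prop :=
  exists k : 'I_(size Delta) -> nat, v = \sum_(i < size Delta) (k i)%:R *: Delta`_i.

Definition pos_root Phi Delta b : Prop := b \in Phi /\ nonneg_comb Delta b.

Definition highest_root Phi Delta ah : Prop :=
  pos_root Phi Delta ah /\
  forall b, pos_root Phi Delta b -> nonneg_comb Delta (ah - b).

Definition long_root Phi a : Prop :=
  a \in Phi /\ forall b, b \in Phi -> dot b b <= dot a a.

Definition prod_refl (s : seq 'cV[R]_n) : 'M[R]_n :=
  \big[mulmx/1%:M]_(a <- s) refl_mx a.

Definition in_W Phi (w : 'M[R]_n) : Prop :=
  exists s, {subset s <= Phi} /\ w = prod_refl s.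

Definition is_length Delta (w : 'M[R]_n) (k : nat) : Prop :=
  (exists s, {subset s <= Delta} /\ w = prod_refl s /\ size s = k) /\
  (forall s, {subset s <= Delta} -> w = prod_refl s -> (k <= size s)%N).

Definition weyl_length Delta (w : 'M[R]_n) : nat :=
  epsilon (inhabits 0%N) (is_length Delta w).

Definition Itilde Delta ah : seq 'cV[R]_n := [seq a <- Delta | dot ah a == 0].

Definition in_X Phi Delta ah (w : 'M[R]_n) : Prop :=
  in_W Phi w /\
  forall b, pos_root Phi Delta b -> in_span (Itilde Delta ah) b ->
    pos_root Phi Delta (w *m b).

End RootSystems.

(* Main.v *)
Require Import Defs.
From mathcomp Require Import all_boot all_order all_algebra.
From mathcomp Require Import reals.
From mathcomp Require Import ring lra.
From Stdlib Require Import ClassicalEpsilon.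
Set Implicit Arguments. Unset Strict Implicit. Unset Printing Implicit Defensive.
Import Order.TTheory GRing.Theory Num.Theory.
Local Open Scope ring_scope.
Section Lin.
Variables (R : realType) (n : nat).
Implicit Types (u v a b : 'cV[R]_n) (M U : 'M[R]_n).

Lemma dotE u v : dot u v = (u^T *m v) 0 0.
Proof. by rewrite /dot !mxE; apply: eq_bigr => i _; rewrite !mxE. Qed.

Lemma trmul_scal u v : u^T *m v = (dot u v)%:M.
Proof. by apply/matrixP => i j; rewrite !ord1 [RHS]mxE eqxx mulr1n dotE. Qed.

Lemma dotC u v : dot u v = dot v u.
Proof. by rewrite /dot; apply: eq_bigr => i _; rewrite mulrC. Qed.

Lemma dotDr u v w : dot u (v + w) = dot u v + dot u w.
Proof. by rewrite /dot -big_split; apply: eq_bigr => i _; rewrite mxE mulrDr. Qed.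

Lemma dotZr u v (c : R) : dot u (c *: v) = c * dot u v.
Proof. by rewrite /dot mulr_sumr; apply: eq_bigr => i _; rewrite mxE mulrCA. Qed.

Lemma dotNr u v : dot u (- v) = - dot u v.
Proof. by rewrite -scaleN1r dotZr mulN1r. Qed.

Lemma dotBr u v w : dot u (v - w) = dot u v - dot u w.
Proof. by rewrite dotDr dotNr. Qed.

Lemma dotDl u v w : dot (v + w) u = dot v u + dot w u.
Proof. by rewrite dotC dotDr !(dotC u). Qed.
Lemma dotZl u v (c : R) : dot (c *: v) u = c * dot v u.
Proof. by rewrite dotC dotZr dotC. Qed.
Lemma dotNl u v : dot (- v) u = - dot v u.
Proof. by rewrite dotC dotNr dotC. Qed.

Lemma dot_sumr u (I : Type) (r : seq I) (P : pred I) (F : I -> 'cV[R]_n) :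
  dot u (\sum_(i <- r | P i) F i) = \sum_(i <- r | P i) dot u (F i).
Proof.
elim/big_rec2: _ => [|i x y _ <-]; last by rewrite dotDr.
by rewrite /dot big1 // => i _; rewrite mxE mulr0.
Qed.

Lemma dot_ge0 u : 0 <= dot u u.
Proof. by rewrite /dot sumr_ge0 // => i _; rewrite -expr2 sqr_ge0. Qed.

Lemma dot_eq0 u : (dot u u == 0) = (u == 0).
Proof.
apply/idP/idP; last by move/eqP->; rewrite /dot big1 // => i _; rewrite mxE mul0r.
move=> /eqP h; apply/eqP/matrixP => i j; rewrite ord1 mxE.
have := h; rewrite /dot => /eqP; rewrite psumr_eq0; last by move=> k _; rewrite -expr2 sqr_ge0.
by move=> /allP /(_ i (mem_index_enum _)) /implyP /(_ isT); rewrite mulf_eq0 orbb => /eqP.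
Qed.

Lemma dot_gt0 u : u != 0 -> 0 < dot u u.
Proof. by move=> h; rewrite lt_def dot_ge0 dot_eq0 h. Qed.

Lemma reflE a v : refl_mx a *m v = v - (2 / dot a a * dot a v) *: a.
Proof.
rewrite /refl_mx mulmxBl mul1mx -scalemxAl -mulmxA trmul_scal mul_mx_scalar.
by rewrite scalerA.
Qed.

Lemma refl_tr a : (refl_mx a)^T = refl_mx a.
Proof. by rewrite /refl_mx linearB /= linearZ /= trmx_mul trmxK tr_scalar_mx. Qed.

Lemma reflN a : refl_mx (- a) = refl_mx a.
Proof. by rewrite /refl_mx dotNl dotNr opprK linearN /= mulNmx mulmxN opprK. Qed.

Lemma refl_self a : a != 0 -> refl_mx a *m a = - a.
Proof.
move=> a0; rewrite reflE mulrAC -mulrA divff ?mulr1; last by rewrite dot_eq0.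
by rewrite scaler_nat mulr2n opprD addrA subrr add0r.
Qed.

Lemma refl_invol a : a != 0 -> refl_mx a *m refl_mx a = 1%:M.
Proof.
move=> a0; set d := dot a a.
have d0 : d != 0 by rewrite /d dot_eq0.
have PP : (a *m a^T) *m (a *m a^T) = d *: (a *m a^T).
  by rewrite mulmxA -(mulmxA a) trmul_scal mul_mx_scalar scalemxAl.
rewrite /refl_mx -/d mulmxBl mul1mx mulmxBr mulmx1 -!scalemxAl -!scalemxAr PP.
rewrite scalerA scalerA.
have -> : 2 / d * (2 / d) * d = 2 / d + 2 / d by field.
rewrite scalerDl; set X := (_ *: _); rewrite opprD.
by rewrite opprK addKr subrK.
Qed.

Lemma refl_orth a : a != 0 -> (refl_mx a)^T *m refl_mx a = 1%:M.
Proof. by move=> a0; rewrite refl_tr refl_invol. Qed.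

Lemma dot_orth U u v : U^T *m U = 1%:M -> dot (U *m u) (U *m v) = dot u v.
Proof. by move=> h; rewrite !dotE trmx_mul mulmxA -(mulmxA u^T) h mulmx1. Qed.

Lemma refl_conj U a : U^T *m U = 1%:M -> refl_mx (U *m a) *m U = U *m refl_mx a.
Proof.
move=> h; rewrite /refl_mx dot_orth // mulmxBl mul1mx mulmxBr mulmx1.
congr (_ - _); rewrite -scalemxAl -scalemxAr; congr (_ *: _).
by rewrite trmx_mul -!mulmxA h mulmx1.
Qed.

Lemma orth_mul U (V : 'M[R]_n) : U^T *m U = 1%:M -> V^T *m V = 1%:M -> (U *m V)^T *m (U *m V) = 1%:M.
Proof. by move=> hU hV; rewrite trmx_mul mulmxA -(mulmxA V^T) hU mulmx1 hV. Qed.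

End Lin.

Section Roots.
Variables (R : realType) (n : nat) (Phi Delta : seq 'cV[R]_n).
Hypothesis hrs : root_system Phi.
Hypothesis hred : reduced Phi.
Hypothesis hb : is_basis Phi Delta.
Local Notation D := Delta.
Local Notation m := (size Delta).
Local Notation pos := (pos_root Phi Delta).

Definition comb (c : 'I_m -> R) : 'cV[R]_n := \sum_(i < m) c i *: D`_i.

Lemma combD c d : comb c + comb d = comb (fun i => c i + d i).
Proof. by rewrite /comb -big_split; apply: eq_bigr => i _; rewrite scalerDl. Qed.
Lemma combN c : - comb c = comb (fun i => - c i).
Proof. by rewrite /comb -sumrN; apply: eq_bigr => i _; rewrite scaleNr. Qed.
Lemma combB c d : comb c - comb d = comb (fun i => c i - d i).
Proof. by rewrite combN combD. Qed.

Lemma comb_uniq c d : comb c = comb d -> forall i, c i = d i.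
Proof.
move=> h i; case: hb => _ hli _; apply/eqP; rewrite -subr_eq0; apply/eqP.
by apply: (hli (fun i => c i - d i)) => //; rewrite -/(comb (fun i => c i - d i)) -combB h subrr.
Qed.

Lemma comb_delta c i : (forall j, j != i -> c j = 0) -> comb c = c i *: D`_i.
Proof.
move=> h; rewrite /comb (bigD1 i) //= big1 ?addr0 // => j /h ->; exact: scale0r.
Qed.

Lemma D_in (i : 'I_m) : D`_i \in Phi.
Proof. by case: hb => sub _ _; apply: sub; apply: mem_nth. Qed.

Lemma root_ne0 b : b \in Phi -> b != 0.
Proof. move=> hb0; have [h0 _ _ _] := hrs; apply/eqP => e; move: h0; rewrite -e. by rewrite hb0. Qed.

Lemma root_opp b : b \in Phi -> - b \in Phi.
Proof. by case: hrs => _ _ hr _ h; rewrite -refl_self ?root_ne0 //; apply: hr. Qed.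

Lemma refl_root a b : a \in Phi -> b \in Phi -> refl_mx a *m b \in Phi.
Proof. by case: hrs => _ _ hr _; apply: hr. Qed.

Definition natc (k : 'I_m -> nat) := fun i => (k i)%:R : R.

Lemma pos_or_neg b : b \in Phi -> pos_root Phi D b \/ pos_root Phi D (- b).
Proof.
move=> bP; case: hb => _ _ /(_ b bP) [k [e|e]].
  by left; split => //; exists k.
by right; split; [exact: root_opp | exists k; rewrite e opprK].
Qed.

Lemma not_pos_neg b : pos_root Phi D b -> pos_root Phi D (- b) -> False.
Proof.
move=> [bP [k ek]] [_ [l el]].
have : comb (natc k) = comb (fun i => - natc l i).
  by rewrite -combN; rewrite /comb /natc -ek -el opprK.
move=> /comb_uniq h.
have k0 : forall i, k i = 0%N.
  move=> i; have := h i; rewrite /natc => e.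
  have : (k i)%:R + (l i)%:R = 0 :> R by rewrite e addNr.
  by rewrite -natrD => /eqP; rewrite pnatr_eq0 addn_eq0 => /andP [/eqP].
move: (root_ne0 bP); rewrite ek big1 ?eqxx // => i _; by rewrite k0 scale0r.
Qed.

Lemma simple_pos (i : 'I_m) : pos_root Phi D D`_i.
Proof.
split; first exact: D_in.
exists (fun j => nat_of_bool (j == i)).
rewrite -/(comb (natc (fun j => nat_of_bool (j == i)))) (comb_delta (i := i)).
  by rewrite /natc eqxx scale1r.
by move=> j /negbTE; rewrite /natc => ->.
Qed.

Lemma reflE' (a b : 'cV[R]_n) : refl_mx a *m b = b - (2 * dot a b / dot a a) *: a.
Proof. by rewrite reflE; congr (_ - _ *: _); rewrite mulrAC. Qed.

Lemma simple_refl_pos (i : 'I_m) b : pos_root Phi D b -> b != D`_i ->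
  pos_root Phi D (refl_mx D`_i *m b).
Proof.
move=> [bP [k ek]] bi.
have rP : refl_mx D`_i *m b \in Phi by apply: refl_root => //; exact: D_in.
case: (pos_or_neg rP) => // [[_ [l el]]].
exfalso; set c := 2 * dot D`_i b / dot D`_i D`_i.
have e1 : comb (fun j => natc k j - c * (j == i)%:R) = comb (fun j => - natc l j).
  rewrite -combN -combB /comb /natc -ek -el reflE' opprK; congr (_ - _).
  rewrite -/(comb _) (comb_delta (i := i)); first by rewrite eqxx mulr1.
  by move=> j /negbTE ->; rewrite mulr0.
have kj : forall j, j != i -> k j = 0%N.
  move=> j ji; have := comb_uniq e1 j; rewrite (negbTE ji) mulr0 subr0 /natc => e.
  have : (k j)%:R + (l j)%:R = 0 :> R by rewrite e addNr.
  by rewrite -natrD => /eqP; rewrite pnatr_eq0 addn_eq0 => /andP [/eqP].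
have eb : b = (k i)%:R *: D`_i.
  rewrite ek -/(comb (natc k)) (comb_delta (i := i)) //.
  by move=> j /kj; rewrite /natc => ->.
have := hred (D_in i) (_ : (k i)%:R *: D`_i \in Phi); rewrite -eb => /(_ bP) [e|e].
  by move: bi; rewrite eb e scale1r eqxx.
by have := ler0n R (k i); rewrite e; lra.
Qed.


Lemma prod_nil : prod_refl [::] = 1%:M :> 'M[R]_n.
Proof. by rewrite /prod_refl big_nil. Qed.
Lemma prod_cons a s : prod_refl (a :: s) = refl_mx a *m prod_refl s :> 'M[R]_n.
Proof. by rewrite /prod_refl big_cons. Qed.
Lemma prod_cat (s t : seq 'cV[R]_n) : prod_refl (s ++ t) = prod_refl s *m prod_refl t.
Proof.
elim: s => [|a s IH]; first by rewrite prod_nil mul1mx.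
by rewrite cat_cons !prod_cons IH mulmxA.
Qed.

Lemma word_root s b : {subset s <= Phi} -> b \in Phi -> prod_refl s *m b \in Phi.
Proof.
elim: s => [|a s IH] sP bP; first by rewrite prod_nil mul1mx.
rewrite prod_cons -mulmxA; apply: refl_root => //; first by apply: sP; rewrite inE eqxx.
by apply: IH => // x xs; apply: sP; rewrite inE xs orbT.
Qed.

Lemma word_orth s : {subset s <= Phi} -> (prod_refl s)^T *m prod_refl s = 1%:M.
Proof.
elim: s => [|a s IH] sP; first by rewrite prod_nil trmx1 mulmx1.
rewrite prod_cons; apply: orth_mul; last by apply: IH => x xs; apply: sP; rewrite inE xs orbT.
by apply: refl_orth; apply: root_ne0; apply: sP; rewrite inE eqxx.
Qed.

Lemma DsubPhi (s : seq 'cV[R]_n) : {subset s <= D} -> {subset s <= Phi}.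
Proof. by case: hb => sub _ _ h x /h /sub. Qed.

Lemma D_index (a : 'cV[R]_n) : a \in D -> exists j : 'I_m, a = D`_j.
Proof. move=> aD; have h : (index a D < m)%N by rewrite index_mem.
by exists (Ordinal h); rewrite /= nth_index. Qed.


Definition posb (b : 'cV[R]_n) : bool :=
  if excluded_middle_informative (pos b) then true else false.
Lemma posbP b : reflect (pos b) (posb b).
Proof. by rewrite /posb; case: excluded_middle_informative => h; constructor. Qed.

Definition PP : seq 'cV[R]_n := undup [seq b <- Phi | posb b].
Lemma mem_PP b : (b \in PP) = posb b.
Proof.
rewrite /PP mem_undup mem_filter; apply/andP/idP => [[]//|h]; split => //.
by case/posbP: h.
Qed.

Definition NN (w : 'M[R]_n) : nat := (\sum_(b <- PP) posb (- (w *m b)))%N.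

Lemma sum_invol (phi : 'cV[R]_n -> 'cV[R]_n) (F : 'cV[R]_n -> nat) :
  (forall b, b \in PP -> phi b \in PP) -> (forall b, b \in PP -> phi (phi b) = b) ->
  (\sum_(b <- PP) F (phi b) = \sum_(b <- PP) F b)%N.
Proof.
move=> h1 h2; rewrite -(big_map phi predT F); apply: perm_big.
apply: uniq_perm.
- rewrite map_inj_in_uniq ?undup_uniq //.
  by move=> x y xP yP e; rewrite -(h2 x xP) -(h2 y yP) e.
- exact: undup_uniq.
move=> x; apply/mapP/idP => [[y yP ->]|xP]; first exact: h1.
by exists (phi x); [apply: h1 | rewrite h2].
Qed.

Lemma pos_neg_excl b : pos b -> posb (- b) = false.
Proof. by move=> h; apply/posbP => h'; exact: (not_pos_neg h h'). Qed.

Lemma root_sign b : b \in Phi -> posb b = ~~ posb (- b).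
Proof.
move=> bP; case: (pos_or_neg bP) => h.
  by rewrite (pos_neg_excl h); apply/posbP.
have : posb (- b) by apply/posbP.
move=> ->; apply/posbP => h'; exact: (not_pos_neg h' h).
Qed.

Lemma NN_simple s (i : 'I_m) : {subset s <= Phi} ->
  (NN (prod_refl s *m refl_mx D`_i) + posb (- (prod_refl s *m D`_i))
   = NN (prod_refl s) + posb (prod_refl s *m D`_i))%N.
Proof.
move=> sP; set w := prod_refl s; set a := D`_i.
have aP : a \in PP by rewrite mem_PP; apply/posbP; exact: simple_pos.
pose phi b := if b == a then b else refl_mx a *m b.
have h1 : forall b, b \in PP -> phi b \in PP.
  move=> b; rewrite /phi; case: eqP => // /eqP ba; rewrite !mem_PP => /posbP bp.
  by apply/posbP; apply: simple_refl_pos.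
have h2 : forall b, b \in PP -> phi (phi b) = b.
  move=> b bP; rewrite /phi; case: (b =P a) => [->|ne]; first by rewrite eqxx.
  have a0 : a != 0 by apply: root_ne0; apply: D_in.
  rewrite ifF; first by rewrite mulmxA refl_invol ?mul1mx.
  apply/eqP => e; move: bP; rewrite mem_PP => /posbP bP.
  have eb : b = - a by rewrite -(refl_self a0) -[X in _ = _ *m X]e mulmxA refl_invol // mul1mx.
  by apply: (not_pos_neg (simple_pos i)); rewrite -/a -eb.
rewrite /NN -(sum_invol (fun b => posb (- (w *m b))) h1 h2).
rewrite (perm_big _ (perm_to_rem aP)) [in RHS](perm_big _ (perm_to_rem aP)) !big_cons.
rewrite /phi eqxx.
have -> : (\sum_(j <- rem a PP) posb (- (w *m refl_mx a *m j)) =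
          \sum_(j <- rem a PP) posb (- (w *m (if j == a then j else refl_mx a *m j))))%N.
  rewrite !big_seq; apply: eq_bigr => j jr.
  have ja : j != a by move: jr; rewrite mem_rem_uniq ?undup_uniq // inE => /andP [].
  by rewrite (negbTE ja) mulmxA.
rewrite -mulmxA refl_self ?root_ne0 ?D_in // mulmxN opprK.
rewrite /= addnC [in RHS]addnC !addnA; congr (_ + _)%N; exact: addnC.
Qed.

Lemma deletion (u : seq 'cV[R]_n) (i : 'I_m) : {subset u <= D} ->
  posb (- (prod_refl u *m D`_i)) ->
  exists v, [/\ {subset v <= D}, (size v).+1 = size u &
                prod_refl u *m refl_mx D`_i = prod_refl v].
Proof.
elim: u => [|a u IH] uD.
  rewrite prod_nil mul1mx => /posbP h; exfalso; exact: (not_pos_neg (simple_pos i) h).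
have uD' : {subset u <= D} by move=> x xu; apply: uD; rewrite inE xu orbT.
have aD : a \in D by apply: uD; rewrite inE eqxx.
set U := prod_refl u.
case: (boolP (posb (- (U *m D`_i)))) => hU.
  move: (IH uD' hU) => [v [vD sv ev]] _; exists (a :: v); split.
  - by move=> x; rewrite inE => /orP [/eqP ->|]; [done | exact: vD].
  - by rewrite /= sv.
  - by rewrite !prod_cons -mulmxA ev.
move=> hn.
have UP : U *m D`_i \in Phi by apply: word_root; [exact: DsubPhi | exact: D_in].
have Upos : pos (U *m D`_i) by apply/posbP; rewrite root_sign // hU.
have e : U *m D`_i = a.
  apply/eqP; apply/negP => /negP ne.
  have [j ej] := D_index aD.
  have := simple_refl_pos Upos (_ : U *m D`_i != D`_j); rewrite -ej => /(_ ne) h.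
  by move: hn; rewrite prod_cons -mulmxA -/U (pos_neg_excl h).
exists u; split => //.
have Uo : U^T *m U = 1%:M by apply: word_orth; exact: DsubPhi.
rewrite prod_cons -/U -e refl_conj // -mulmxA refl_invol ?mulmx1 //.
by apply: root_ne0; apply: D_in.
Qed.


Lemma refl_comb (i : 'I_m) (k : 'I_m -> R) (b : 'cV[R]_n) : b = comb k ->
  refl_mx D`_i *m b =
  comb (fun j => k j - 2 * dot D`_i b / dot D`_i D`_i * (j == i)%:R).
Proof.
move=> eb; rewrite -combB reflE' {1}eb; congr (_ - _).
rewrite (comb_delta (i := i)); first by rewrite eqxx mulr1.
by move=> j /negbTE ->; rewrite mulr0.
Qed.

Lemma sum_delta (i : 'I_m) (c : R) : \sum_(j < m) c * (j == i)%:R = c.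
Proof.
rewrite (bigD1 i) //= eqxx mulr1 big1 ?addr0 // => j /negbTE ->; exact: mulr0.
Qed.

Lemma gen_pos (h : nat) : forall b (k : 'I_m -> nat), b \in Phi -> b = comb (natc k) ->
  (\sum_(i < m) k i < h)%N ->
  exists s, {subset s <= D} /\ refl_mx b = prod_refl s.
Proof.
elim: h => [|h IH] b k bP ek; first by rewrite ltn0.
move=> hs.
case: (boolP (b \in D)) => bD.
  exists [:: b]; split; first by move=> x; rewrite inE => /eqP ->.
  by rewrite prod_cons prod_nil mulmx1.
have b0 := root_ne0 bP.
have dbb : dot b b = \sum_(i < m) (k i)%:R * dot D`_i b.
  rewrite {1}ek /comb dotC dot_sumr; apply: eq_bigr => i _; by rewrite dotZr dotC.
have [i hi] : exists i : 'I_m, 0 < dot D`_i b.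
  case: (boolP [exists i : 'I_m, 0 < dot D`_i b]) => [/existsP //|/existsPn hn].
  exfalso; have : dot b b <= 0.
    rewrite dbb -oppr_ge0 -sumrN sumr_ge0 // => i _.
    by rewrite oppr_ge0 mulr_ge0_le0 // leNgt hn.
  by rewrite leNgt dot_gt0.
set c := 2 * dot D`_i b / dot D`_i D`_i.
have Di0 : D`_i != 0 by apply: root_ne0; apply: D_in.
have c1 : 1 <= c.
  have [_ _ _ hz] := hrs; have [z ez] := hz _ _ (D_in i) bP.
  have cz : c = z%:~R by rewrite /c dotC.
  have : 0 < c by rewrite /c divr_gt0 ?mulr_gt0 ?dot_gt0.
  by rewrite cz ltr0z gtz0_ge1 -(ler1z R).
have bpos : pos b by split => //; exists k.
have bi : b != D`_i by apply/eqP => e; move: bD; rewrite e mem_nth.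
have [b'P [k' ek']] := simple_refl_pos bpos bi.
set b' := refl_mx D`_i *m b in b'P ek'.
have ek2 := refl_comb i ek; rewrite -/b' -/c in ek2.
have hk := comb_uniq (etrans (esym ek') ek2).
have hs' : (\sum_(j < m) k' j < h)%N.
  have : (\sum_(j < m) k' j)%:R = (\sum_(j < m) k j)%:R - c :> R.
    rewrite !natr_sum -(sum_delta i c) -sumrB; apply: eq_bigr => j _; exact: hk.
  move=> e; rewrite -ltnS; apply: (leq_trans _ hs).
  by rewrite -(ltr_nat R) !mulrS e; lra.
have [s' [s'D es']] := IH b' k' b'P ek' hs'.
exists (D`_i :: s' ++ [:: D`_i]); split.
  move=> x; rewrite inE mem_cat inE => /orP [/eqP->|/orP [/s'D //|/eqP->]]; exact: mem_nth.
have io : (refl_mx D`_i)^T *m refl_mx D`_i = 1%:M by exact: refl_orth.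
have := refl_conj b' io; rewrite /b' mulmxA refl_invol // mul1mx -/b' es' => e.
rewrite prod_cons prod_cat prod_cons prod_nil mulmx1 mulmxA -e -mulmxA refl_invol //.
by rewrite mulmx1.
Qed.


Lemma refl_gen b : b \in Phi -> exists s, {subset s <= D} /\ refl_mx b = prod_refl s.
Proof.
move=> bP; case: (pos_or_neg bP) => [[_ [k ek]]|[nP [k ek]]].
  by apply: (gen_pos (h := (\sum_(i < m) k i).+1) bP ek).
by rewrite -reflN; apply: (gen_pos (h := (\sum_(i < m) k i).+1) nP ek).
Qed.

Lemma word_gen (s : seq 'cV[R]_n) : {subset s <= Phi} ->
  exists t, {subset t <= D} /\ prod_refl s = prod_refl t.
Proof.
elim: s => [|a s IH] sP; first by exists [::].
have [t [tD et]] : exists t, {subset t <= D} /\ prod_refl s = prod_refl t.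
  by apply: IH => x xs; apply: sP; rewrite inE xs orbT.
have [u [uD eu]] := refl_gen (sP a (mem_head a s)).
exists (u ++ t); split; last by rewrite prod_cons prod_cat eu et.
by move=> x; rewrite mem_cat => /orP [/uD|/tD].
Qed.

Lemma len_NN t : forall w, is_length D w t -> NN w = t.
Proof.
elim: t => [|t IH] w [[s [sD [ew ss]]] hmin].
  move: ss => /size0nil es; rewrite ew es prod_nil /NN big_seq big1 // => b.
  rewrite mem_PP mul1mx => /posbP h; by rewrite pos_neg_excl.
case/lastP: s sD ew ss => [//|s' a] sD ew; rewrite size_rcons => -[ss].
have aD : a \in D by apply: sD; rewrite mem_rcons mem_head.
have s'D : {subset s' <= D} by move=> x xs; apply: sD; rewrite mem_rcons inE xs orbT.
have [j ej] := D_index aD.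
have ew' : w = prod_refl s' *m refl_mx D`_j.
  by rewrite ew -cats1 prod_cat prod_cons prod_nil mulmx1 ej.
have hl : is_length D (prod_refl s') t.
  split; first by exists s'.
  move=> u uD eu; have := hmin (rcons u a).
  rewrite size_rcons ltnS; apply.
    by move=> x; rewrite mem_rcons inE => /orP [/eqP->|/uD].
  by rewrite -cats1 prod_cat prod_cons prod_nil mulmx1 -eu ej -ew'.
have N' := IH _ hl.
have w'P : prod_refl s' *m D`_j \in Phi by apply: word_root; [exact: DsubPhi|exact: D_in].
case: (boolP (posb (- (prod_refl s' *m D`_j)))) => hn.
  have [v [vD sv ev]] := deletion s'D hn.
  have := hmin v vD; rewrite ew' ev => /(_ erefl).
  by rewrite -ss -sv ltnNge leqnSn.
have := NN_simple j (DsubPhi s'D); rewrite -ew' (negbTE hn) N' (root_sign w'P) hn.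
by rewrite addn0 addn1.
Qed.

Lemma ex_min (P : nat -> Prop) : (exists k, P k) -> exists k, P k /\ forall j, P j -> (k <= j)%N.
Proof.
move=> hP.
pose Pb k := if excluded_middle_informative (P k) then true else false.
have PbP : forall k, reflect (P k) (Pb k).
  by move=> k; rewrite /Pb; case: excluded_middle_informative => h; constructor.
have hb' : exists k, Pb k by case: hP => k hk; exists k; apply/PbP.
case: (ex_minnP hb') => k /PbP hk hmin; exists k; split => // j /PbP; exact: hmin.
Qed.

Lemma weyl_len w : in_W Phi w -> weyl_length D w = NN w.
Proof.
move=> [s [sP ew]].
have [t [tD et]] := word_gen sP.
have [k [[u [uD [eu su]]] hk]] :
  exists k, (exists u, {subset u <= D} /\ w = prod_refl u /\ size u = k) /\
     forall j, (exists u, {subset u <= D} /\ w = prod_refl u /\ size u = j) -> (k <= j)%N.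
  by apply: ex_min; exists (size t), t; rewrite ew et.
have il : is_length D w k.
  split; first by exists u.
  by move=> v vD ev; apply: hk; exists v.
have := epsilon_spec (inhabits 0%N) (is_length D w) (ex_intro _ k il).
by rewrite -/(weyl_length D w) => /len_NN ->.
Qed.


Lemma combZ (c : R) k : c *: comb k = comb (fun j => c * k j).
Proof. by rewrite /comb scaler_sumr; apply: eq_bigr => j _; rewrite scalerA. Qed.

Lemma combE k : comb (natc k) = \sum_(i < m) (k i)%:R *: D`_i.
Proof. by []. Qed.

Lemma natc_ge0 k j : 0 <= natc k j.
Proof. exact: ler0n. Qed.

Variable ah : 'cV[R]_n.
Hypothesis hh : highest_root Phi D ah.

Lemma ahP : ah \in Phi.
Proof. by case: hh => [[]]. Qed.

Lemma dominant (i : 'I_m) : 0 <= dot D`_i ah.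
Proof.
rewrite leNgt; apply/negP => hneg.
have [[ahP' [h eh]] hhi] := hh.
set c := 2 * dot D`_i ah / dot D`_i D`_i.
have Di0 : D`_i != 0 by apply: root_ne0; apply: D_in.
have c0 : c < 0 by rewrite /c pmulr_llt0 ?invr_gt0 ?dot_gt0 // pmulr_rlt0.
have er := refl_comb i eh; rewrite -/c in er.
have rP : refl_mx D`_i *m ah \in Phi by apply: refl_root => //; exact: D_in.
case: (pos_or_neg rP) => rpos.
  have [p ep] := hhi _ rpos.
  have : comb (natc p) = comb (fun j => c * (j == i)%:R).
    rewrite [LHS]/comb /natc -ep reflE' opprB addrC subrK -/c (comb_delta (i := i)).
      by rewrite eqxx mulr1.
    by move=> j /negbTE ->; rewrite mulr0.
  move=> /comb_uniq /(_ i); rewrite eqxx mulr1 => e.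
  by have := natc_ge0 p i; rewrite e; lra.
case: rpos => _ [q eq].
have : comb (natc q) = comb (fun j => - (natc h j - c * (j == i)%:R)).
  by rewrite -combN -er combE -eq.
move=> /comb_uniq /(_ i); rewrite eqxx mulr1 => e.
by have := natc_ge0 q i; have := natc_ge0 h i; rewrite e; lra.
Qed.

Lemma dot_pos_ge0 b : pos b -> 0 <= dot ah b.
Proof.
move=> [_ [k ->]]; rewrite dot_sumr sumr_ge0 // => j _.
by rewrite dotZr mulr_ge0 ?ler0n // dotC dominant.
Qed.

Lemma sref_neg b : pos b -> 0 < dot ah b -> pos (- (refl_mx ah *m b)).
Proof.
move=> bpos hd; have [[ahP' [h eh]] hhi] := hh.
have [bP [k ek]] := bpos.
have rP : refl_mx ah *m b \in Phi by exact: refl_root.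
case: (pos_or_neg rP) => // rpos; exfalso.
have [_ [m' em]] := rpos.
have [q eq] := hhi _ bpos.
set c := 2 * dot ah b / dot ah ah.
have ah0 : ah != 0 by exact: root_ne0.
have c1 : 1 <= c.
  have [_ _ _ hz] := hrs; have [z ez] := hz _ _ ahP' bP.
  have cz : c = z%:~R by rewrite /c dotC.
  have : 0 < c by rewrite /c divr_gt0 ?mulr_gt0 ?dot_gt0.
  by rewrite cz ltr0z gtz0_ge1 -(ler1z R).
have E1 : comb (natc m') = comb (fun j => natc k j - c * natc h j).
  by rewrite combE -em reflE' -/c ek eh -!combE combZ combB.
have E2 : comb (natc q) = comb (fun j => natc h j - natc k j).
  by rewrite combE -eq ek eh -!combE combB.
have m0 : forall j, m' j = 0%N.
  move=> j; have e1 := comb_uniq E1 j; have e2 := comb_uniq E2 j.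
  have := natc_ge0 m' j; have := natc_ge0 q j; have := natc_ge0 h j.
  move=> h1 h2 h3.
  have : natc m' j <= 0 by nra.
  by rewrite /natc lern0 => /eqP.
move: (root_ne0 rP); rewrite em /comb big1 ?eqxx // => j _.
by rewrite /natc m0 scale0r.
Qed.

Lemma D_uniq : uniq D.
Proof.
apply/negPn/negP => /(uniqPn 0) [i [j [ij jm e]]].
have im : (i < m)%N by exact: ltn_trans jm.
pose I := Ordinal im; pose J := Ordinal jm.
have IJ : I != J by rewrite -val_eqE /= neq_ltn ij.
case: hb => _ hli _.
have := hli (fun l => (l == I)%:R - (l == J)%:R).
rewrite -/(comb (fun l => (l == I)%:R - (l == J)%:R)) -combB.
rewrite (comb_delta (i := I)); last by move=> l /negbTE ->; rewrite mulr0n.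
rewrite (comb_delta (i := J)); last by move=> l /negbTE ->; rewrite mulr0n.
rewrite !eqxx !scale1r /= e subrr => /(_ erefl I).
by rewrite eqxx (negbTE IJ) subr0 => /eqP; rewrite oner_eq0.
Qed.


Lemma span_Itilde b : pos b -> dot ah b = 0 -> in_span (Itilde D ah) b.
Proof.
move=> [bP [k ek]] hd.
have hz : forall j : 'I_m, dot ah D`_j != 0 -> k j = 0%N.
  move=> j hj; move: hd; rewrite ek dot_sumr => /eqP.
  rewrite psumr_eq0; last by move=> l _; rewrite dotZr mulr_ge0 ?ler0n // dotC dominant.
  move=> /allP /(_ j (mem_index_enum _)) /= /eqP; rewrite dotZr => /eqP.
  by rewrite mulf_eq0 (negbTE hj) orbF pnatr_eq0 => /eqP.
pose f x := \sum_(l < m | D`_l == x) natc k l.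
exists (fun j => f (Itilde D ah)`_j).
have e1 : \sum_(j < size (Itilde D ah)) f (Itilde D ah)`_j *: (Itilde D ah)`_j =
          \sum_(x <- Itilde D ah) f x *: x by rewrite (big_nth 0) big_mkord.
rewrite e1 /Itilde big_filter big_mkcond /= (big_nth 0) big_mkord ek.
apply: eq_bigr => j _.
have fj : f D`_j = natc k j.
  rewrite /f (bigD1 j) //= big1 ?addr0 // => l /andP [/eqP e lj]; exfalso.
  move: lj; rewrite -val_eqE /=; apply/negP/negPn/eqP.
  by apply/eqP; rewrite -(nth_uniq 0 _ _ D_uniq) ?ltn_ord // e.
case: eqP => [_|/eqP hj]; first by rewrite fj.
by rewrite (hz j hj) scale0r.
Qed.


Lemma NN_compl (x : 'M[R]_n) (sx : seq 'cV[R]_n) : {subset sx <= Phi} -> x = prod_refl sx ->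
  (forall g, g \in PP -> posb (- (x *m g)) -> posb (- (refl_mx ah *m g))) ->
  (NN (x *m refl_mx ah) + NN x = NN (refl_mx ah))%N.
Proof.
move=> sxP ex hinc; set s := refl_mx ah.
have ah0 : ah != 0 by apply: root_ne0; exact: ahP.
have sroot : forall b, b \in Phi -> s *m b \in Phi by move=> b; apply: refl_root; exact: ahP.
have xroot : forall b, b \in Phi -> x *m b \in Phi by move=> b; rewrite ex; exact: word_root.
have PPphi : forall b, b \in PP -> b \in Phi by move=> b; rewrite mem_PP => /posbP [].
pose phi b := if posb (s *m b) then s *m b else - (s *m b).
have h1 : forall b, b \in PP -> phi b \in PP.
  move=> b bP; rewrite /phi mem_PP; case: ifP => // /negbT.
  by rewrite root_sign ?sroot ?PPphi // negbK.
have h2 : forall b, b \in PP -> phi (phi b) = b.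
  move=> b bP; rewrite /phi; case hs: (posb (s *m b)).
    by rewrite mulmxA refl_invol // mul1mx -mem_PP bP.
  rewrite mulmxN mulmxA refl_invol // mul1mx.
  by have := bP; rewrite mem_PP => /posbP /pos_neg_excl ->; rewrite opprK.
rewrite /NN -(sum_invol (fun g => posb (- (x *m g))) h1 h2) -big_split /=.
apply: eq_big_seq => b bPP; rewrite /phi -mulmxA.
case: (boolP (posb (s *m b))) => hs.
  rewrite (pos_neg_excl (elimT (posbP _) hs)).
  case: (boolP (posb (- (x *m (s *m b))))) => // hx.
  have := hinc _ (_ : s *m b \in PP) hx; rewrite ?mem_PP // mulmxA refl_invol // mul1mx.
  by move=> /(_ hs); have := bPP; rewrite mem_PP => /posbP /pos_neg_excl ->.
have hns : posb (- (s *m b)) by move: hs; rewrite root_sign ?sroot ?PPphi // negbK.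
rewrite hns mulmxN opprK.
have := root_sign (xroot _ (sroot _ (PPphi _ bPP))).
by case: (posb (x *m (s *m b))); case: (posb (- (x *m (s *m b)))).
Qed.

End Roots.

Theorem proposition1p6 (R : realType) (n : nat) (Phi Delta : seq 'cV[R]_n)
    (ah : 'cV[R]_n) :
  root_system Phi -> reduced Phi -> irreducible Phi -> is_basis Phi Delta ->
  highest_root Phi Delta ah ->
  forall (alpha : 'cV[R]_n) (x : 'M[R]_n),
    pos_root Phi Delta alpha -> long_root Phi alpha ->
    in_X Phi Delta ah x -> x *m ah = alpha ->
    (weyl_length Delta (x *m refl_mx ah))%:Z
      = (weyl_length Delta (refl_mx ah))%:Z - (weyl_length Delta x)%:Z.
Proof.
move=> hrs hred _ hb hh alpha x _ _ [[sx [sxP ex]] hX] _.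
have ahP' : ah \in Phi by case: hh => [[]].
have sW : in_W Phi (refl_mx ah).
  exists [:: ah]; split; first by move=> y; rewrite inE => /eqP ->.
  by rewrite prod_cons prod_nil mulmx1.
have xsW : in_W Phi (x *m refl_mx ah).
  exists (sx ++ [:: ah]); split.
    by move=> y; rewrite mem_cat inE => /orP [/sxP|/eqP ->].
  by rewrite prod_cat prod_cons prod_nil mulmx1 ex.
have xW : in_W Phi x by exists sx.
rewrite !(weyl_len hrs hred hb) //.
have e := NN_compl hrs hb hh sxP ex.
rewrite -e ?PoszD ?addrK //.
move=> g gP hg; apply/posbP.
have gpos : pos_root Phi Delta g by move: gP; rewrite mem_PP => /posbP.
have := dot_pos_ge0 hrs hb hh gpos; rewrite le_eqVlt => /orP [/eqP hd|hd].
  exfalso; have := hX g gpos (span_Itilde hrs hb hh gpos (esym hd)).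
  by move/(pos_neg_excl hrs hb); rewrite hg.
exact: sref_neg.
Qed.
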